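(* Let $S$ be an LAD-AG-groupoid. Then $S$ is self-dual, i.e. $a(bc)=c(ba)$ for all $a,b,c\in S$.
   Context: A groupoid is a set $S$ with a binary operation written as juxtaposition; $ab\cdot c$ means $(ab)c$ and $a\cdot bc$ means $a(bc)$. An AG-groupoid is a groupoid satisfying the left invertive law $(ab)c=(cb)a$ for all $a,b,c\in S$. An LAD-AG-groupoid (left abelian distributive AG-groupoid) is an AG-groupoid satisfying $a(bc)=(ab)(ca)$ for all $a,b,c\in S$. *)

(* Defs.v *)
Definition left_invertive {S : Type} (op : S -> S -> S) : Prop :=
  forall a b c : S, op (op a b) c = op (op c b) a.

Definition LAD_AG_groupoid {S : Type} (op : S -> S -> S) : Prop :=
  left_invertive op /\
  (forall a b c : S, op a (op b c) = op (op a b) (op c a)).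

Definition self_dual {S : Type} (op : S -> S -> S) : Prop :=
  forall a b c : S, op a (op b c) = op c (op b a).

(* Main.v *)
Require Import Defs.

Theorem mainTheorem2 (S : Type) (op : S -> S -> S) (H : LAD_AG_groupoid op) :
  self_dual op.
Proof.
  destruct H as [LI LAD].
  unfold left_invertive in LI.
  Ltac step LI LAD := first [reflexivity | apply LI | apply LAD | symmetry; apply LAD | f_equal; step LI LAD].
  intros a b c.
  transitivity (op (op a b) (op c a)); [step LI LAD|].
  transitivity (op (op (op c a) b) a); [step LI LAD|].
  transitivity (op (op (op b a) c) a); [step LI LAD|].
  transitivity (op (op a c) (op b a)); [step LI LAD|].
  transitivity (op (op (op a c) b) (op a (op a c))); [step LI LAD|].
  transitivity (op (op (op a (op a c)) b) (op a c)); [step LI LAD|].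
  transitivity (op (op (op (op a a) (op c a)) b) (op a c)); [step LI LAD|].
  transitivity (op (op (op (op (op c a) a) a) b) (op a c)); [step LI LAD|].
  transitivity (op (op (op b a) (op (op c a) a)) (op a c)); [step LI LAD|].
  transitivity (op (op (op a c) (op (op c a) a)) (op b a)); [step LI LAD|].
  transitivity (op (op a (op c (op c a))) (op b a)); [step LI LAD|].
  transitivity (op a (op (op c (op c a)) b)); [step LI LAD|].
  transitivity (op a (op (op (op c c) (op a c)) b)); [step LI LAD|].
  transitivity (op a (op (op b (op a c)) (op c c))); [step LI LAD|].
  transitivity (op (op a (op b (op a c))) (op (op c c) a)); [step LI LAD|].
  transitivity (op (op (op (op c c) a) (op b (op a c))) a); [step LI LAD|].
  transitivity (op (op (op (op b (op a c)) a) (op c c)) a); [step LI LAD|].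
  transitivity (op (op a (op c c)) (op (op b (op a c)) a)); [step LI LAD|].
  transitivity (op a (op (op c c) (op b (op a c)))); [step LI LAD|].
  transitivity (op a (op (op (op b (op a c)) c) c)); [step LI LAD|].
  transitivity (op (op a (op (op b (op a c)) c)) (op c a)); [step LI LAD|].
  transitivity (op (op (op c a) (op (op b (op a c)) c)) a); [step LI LAD|].
  transitivity (op (op (op (op (op b (op a c)) c) a) c) a); [step LI LAD|].
  transitivity (op (op (op (op a c) (op b (op a c))) c) a); [step LI LAD|].
  transitivity (op (op (op c (op b (op a c))) (op a c)) a); [step LI LAD|].
  transitivity (op (op c (op (op b (op a c)) a)) a); [step LI LAD|].
  transitivity (op (op a (op (op b (op a c)) a)) c); [step LI LAD|].
  transitivity (op (op a (op (op (op b a) (op c b)) a)) c); [step LI LAD|].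
  transitivity (op (op a (op (op a (op c b)) (op b a))) c); [step LI LAD|].
  transitivity (op (op a (op a (op (op c b) b))) c); [step LI LAD|].
  transitivity (op (op (op a a) (op (op (op c b) b) a)) c); [step LI LAD|].
  transitivity (op (op (op (op (op (op c b) b) a) a) a) c); [step LI LAD|].
  transitivity (op (op (op (op a a) (op (op c b) b)) a) c); [step LI LAD|].
  transitivity (op (op (op a (op (op c b) b)) (op a a)) c); [step LI LAD|].
  transitivity (op (op a (op (op (op c b) b) a)) c); [step LI LAD|].
  transitivity (op (op a (op (op a b) (op c b))) c); [step LI LAD|].
  transitivity (op (op (op a (op a b)) (op (op c b) a)) c); [step LI LAD|].
  transitivity (op (op (op (op (op c b) a) (op a b)) a) c); [step LI LAD|].
  transitivity (op (op (op (op (op a b) a) (op c b)) a) c); [step LI LAD|].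
  transitivity (op (op (op a (op c b)) (op (op a b) a)) c); [step LI LAD|].
  transitivity (op (op a (op (op c b) (op a b))) c); [step LI LAD|].
  transitivity (op (op a (op (op (op a b) b) c)) c); [step LI LAD|].
  transitivity (op (op (op a (op (op a b) b)) (op c a)) c); [step LI LAD|].
  transitivity (op (op (op (op c a) (op (op a b) b)) a) c); [step LI LAD|].
  transitivity (op (op (op (op (op (op a b) b) a) c) a) c); [step LI LAD|].
  transitivity (op (op (op a c) (op (op (op a b) b) a)) c); [step LI LAD|].
  transitivity (op (op a (op c (op (op a b) b))) c); [step LI LAD|].
  transitivity (op (op a (op (op c (op a b)) (op b c))) c); [step LI LAD|].
  transitivity (op (op a (op (op (op b c) (op a b)) c)) c); [step LI LAD|].
  transitivity (op (op a (op (op b (op c a)) c)) c); [step LI LAD|].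
  transitivity (op (op (op a (op b (op c a))) (op c a)) c); [step LI LAD|].
  transitivity (op (op (op (op c a) (op b (op c a))) a) c); [step LI LAD|].
  transitivity (op (op (op (op (op b (op c a)) a) c) a) c); [step LI LAD|].
  transitivity (op (op (op a c) (op (op b (op c a)) a)) c); [step LI LAD|].
  transitivity (op (op c (op (op b (op c a)) a)) (op a c)); [step LI LAD|].
  transitivity (op c (op (op (op b (op c a)) a) a)); [step LI LAD|].
  transitivity (op c (op (op a a) (op b (op c a)))); [step LI LAD|].
  transitivity (op (op c (op a a)) (op (op b (op c a)) c)); [step LI LAD|].
  transitivity (op (op (op (op b (op c a)) c) (op a a)) c); [step LI LAD|].
  transitivity (op (op (op (op a a) c) (op b (op c a))) c); [step LI LAD|].
  transitivity (op (op c (op b (op c a))) (op (op a a) c)); [step LI LAD|].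
  transitivity (op c (op (op b (op c a)) (op a a))); [step LI LAD|].
  transitivity (op c (op (op (op a a) (op c a)) b)); [step LI LAD|].
  transitivity (op (op c (op (op a a) (op c a))) (op b c)); [step LI LAD|].
  transitivity (op (op c (op a (op a c))) (op b c)); [step LI LAD|].
  transitivity (op (op (op c a) (op (op a c) c)) (op b c)); [step LI LAD|].
  transitivity (op (op (op b c) (op (op a c) c)) (op c a)); [step LI LAD|].
  transitivity (op (op (op (op (op a c) c) c) b) (op c a)); [step LI LAD|].
  transitivity (op (op (op c a) b) (op (op (op a c) c) c)); [step LI LAD|].
  transitivity (op (op (op c a) b) (op (op c c) (op a c))); [step LI LAD|].
  transitivity (op (op (op c a) b) (op c (op c a))); [step LI LAD|].
  transitivity (op (op c a) (op b c)); [step LI LAD|].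
  transitivity (op (op (op b c) a) c); [step LI LAD|].
  transitivity (op (op (op a c) b) c); [step LI LAD|].
  transitivity (op (op c b) (op a c)); [step LI LAD|].
  step LI LAD.
Qed.
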